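(* Consider the Data Collection process with parameter $\beta$ on a connected weighted graph $G=(V,E,w)$ with sink $u_s$ and relative rate vector $\bm{J}$, and suppose the chain $\{Q^\beta_t\}$ is ergodic with stationary distribution $\pi$ under which $\mathbb{E}_\pi[Q(u)]<\infty$ for every $u\ne u_s$. Let $\bm{\eta}\in\mathbb{R}^V$ be the vector of steady-state queue occupancy probabilities ($\bm{\eta}_u=\pi(Q(u)>0)$ for $u\ne u_s$, $\bm{\eta}_{u_s}=0$). Then $\bm{\eta}^T(I-\mathcal{P})=\beta\bm{J}^T$; equivalently, the vector $\bm{x}$ with $\bm{x}_u=\bm{\eta}_u/d_u$ satisfies $\bm{x}^TL=\beta\bm{J}^T$.
   Context: Graph notation: for $u\in V$, the generalized degree is $d_u=\sum_{v:(u,v)\in E}w_{uv}$; $A$ is the weighted adjacency matrix ($A_{uv}=w_{uv}$ if $(u,v)\in E$, else $0$), $D=\mathrm{diag}(d_u)$, $L=D-A$, and $\mathcal{P}=D^{-1}A$ is the transition matrix of the natural random walk, $\mathcal{P}(u,v)=w_{uv}/d_u$. Data Collection process: fix a sink $u_s\in V$ and a set of sources $V_s\subseteq V\setminus\{u_s\}$. The relative rate vector $\bm{J}\in\mathbb{R}^{V}$ satisfies $\bm{J}_v>0$ for $v\in V_s$, $\bm{J}_v=0$ for $v\in V\setminus(V_s\cup\{u_s\})$, and $\bm{J}_{u_s}=-\sum_{v\ne u_s}\bm{J}_v$. Given $\beta>0$ with $\beta\bm{J}_v\le1$ for all $v\in V_s$, the Data Collection process with parameter $\beta$ is the discrete-time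 Markov chain $\{Q^\beta_t\}_{t\ge0}$ on $(\mathbb{N}\cup\{0\})^{V\setminus\{u_s\}}$, where $Q^\beta_t(v)$ is the number of packets in the queue of node $v$ at time $t$, evolving as follows at each step: each $v\in V_s$ independently generates a new packet with probability $\beta\bm{J}_v$ (Bernoulli) and places it in its queue; each node $u\ne u_s$ with nonempty queue picks one packet from its queue and independently picks a neighbor $v$ with probability $w_{uv}/d_u$, and transmits the packet to $v$: the packet is removed from $u$'s queue and added to $v$'s queue if $v\ne u_s$, or removed from the system if $v=u_s$. The sink has no queue. *)

(* Defs.v *)
From Stdlib Require Import Reals Relations.
From HB Require Import structures.
From mathcomp Require Import all_boot.
Open Scope R_scope.

Set Implicit Arguments.
Unset Strict Implicit.
Unset Printing Implicit Defensive.

Lemma Rplus_assoc' : associative Rplus.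
Proof. by move=> a b c; rewrite Rplus_assoc. Qed.
Lemma Rmult_assoc' : associative Rmult.
Proof. by move=> a b c; rewrite Rmult_assoc. Qed.
HB.instance Definition _ := Monoid.isComLaw.Build R 0 Rplus
  Rplus_assoc' Rplus_comm Rplus_0_l.
HB.instance Definition _ := Monoid.isComLaw.Build R 1 Rmult
  Rmult_assoc' Rmult_comm Rmult_1_l.

Section DC.
Variable V : finType.

Definition edge (w : V -> V -> R) (u v : V) : Prop := (0 < w u v).

Definition weighted_graph (w : V -> V -> R) : Prop :=
  (forall u v, 0 <= w u v) /\ (forall u v, w u v = w v u).

Definition connected_graph (w : V -> V -> R) : Prop :=
  forall u v, clos_refl_trans V (edge w) u v.

Definition deg (w : V -> V -> R) (u : V) : R := \big[Rplus/0]_(v : V) w u v.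
Definition adjA (w : V -> V -> R) (u v : V) : R := w u v.
Definition degD (w : V -> V -> R) (u v : V) : R := if u == v then deg w u else 0.
Definition lap (w : V -> V -> R) (u v : V) : R := (degD w u v - adjA w u v).
Definition Ptrans (w : V -> V -> R) (u v : V) : R := (w u v / deg w u).

(* A state is a queue-length vector; the sink coordinate is always 0
   (states with x us <> 0 are not reachable and carry no stationary mass). *)
Definition state := {ffun V -> nat}.
Definition valid_state (us : V) (x : state) : Prop := x us = 0%N.

(* One step given generation outcomes b and transmission targets t:
   a node u <> us with Q_t(u) > 0 sends one packet to t u; each node v
   receives its generated packet (b v) and all packets sent to it. *)
Definition dc_next (us : V) (x : state) (b : {ffun V -> bool})
    (t : {ffun V -> V}) : state :=
  [ffun v => if v == us then 0%N else
     (x v + b v - (0 < x v) + #|[set u | (u != us) && (0 < x u) && (t u == v)]|)%N].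

Definition gen_prob (J : V -> R) (beta : R) (us : V) (b : {ffun V -> bool}) : R :=
  \big[Rmult/1]_(v : V)
     (if v == us then (if b v then 0 else 1)
      else if b v then (beta * J v) else (1 - beta * J v)).

(* probability of the target choice t (independent, w_{uv}/d_u, for busy u;
   idle nodes get the dummy deterministic choice t u = u) *)
Definition tgt_prob (w : V -> V -> R) (us : V) (x : state) (t : {ffun V -> V}) : R :=
  \big[Rmult/1]_(u : V)
     (if (u != us) && (0 < x u)%N then Ptrans w u (t u)
      else if t u == u then 1 else 0).

Definition dc_P (w : V -> V -> R) (J : V -> R) (beta : R) (us : V)
    (x y : state) : R :=
  \big[Rplus/0]_(b : {ffun V -> bool}) \big[Rplus/0]_(t : {ffun V -> V})
     (gen_prob J beta us b * tgt_prob w us x t *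
        (if dc_next us x b t == y then 1 else 0)).

Inductive reach (K : state -> state -> R) : nat -> state -> state -> Prop :=
| reach0 x : reach K 0 x x
| reachS n x y z : (0 < K x y) -> reach K n y z -> reach K n.+1 x z.

Definition irreducible (K : state -> state -> R) (us : V) : Prop :=
  forall x y, valid_state us x -> valid_state us y -> exists n, reach K n x y.

Definition aperiodic (K : state -> state -> R) (us : V) : Prop :=
  forall x, valid_state us x -> exists N, forall n, (N <= n)%N -> reach K n x x.

Definition sums (f : state -> R) (s : R) : Prop :=
  (forall x, 0 <= f x) /\
  is_lub (fun r => exists l : seq state, uniq l /\ r = \big[Rplus/0]_(x <- l) f x) s.

Definition stationary (K : state -> state -> R) (pi : state -> R) : Prop :=
  sums pi 1 /\ forall y, sums (fun x => (pi x * K x y)) (pi y).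

End DC.

(* Main.v *)
Set Warnings "-notation-overridden,-redundant-canonical-projection".
Require Import Defs.
From Stdlib Require Import Reals Relations Lra Classical.
From HB Require Import structures.
From mathcomp Require Import all_boot.
Open Scope R_scope.
Set Implicit Arguments.
Unset Strict Implicit.

HB.instance Definition _ := Monoid.isMulLaw.Build R 0 Rmult Rmult_0_l Rmult_0_r.
HB.instance Definition _ := Monoid.isAddLaw.Build R Rmult Rplus
  Rmult_plus_distr_r Rmult_plus_distr_l.

Section Sums.
Variable V : finType.
Notation S := (state V).
Implicit Types (f g : S -> R) (L : seq S).

Lemma bigR_ge0 (I : Type) (r : seq I) (P : pred I) (F : I -> R) :
  (forall i, P i -> 0 <= F i) -> 0 <= \big[Rplus/0]_(i <- r | P i) F i.
Proof. move=> H; apply: (big_ind (fun x => 0 <= x)) => //; [lra| move=> *; lra]. Qed.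

Lemma bigR_le (I : Type) (r : seq I) (P : pred I) (F G : I -> R) :
  (forall i, P i -> F i <= G i) ->
  \big[Rplus/0]_(i <- r | P i) F i <= \big[Rplus/0]_(i <- r | P i) G i.
Proof. move=> H; apply: (big_ind2 (fun x y => x <= y)) => //; [lra| move=> *; lra]. Qed.



Lemma bigR_le_in (I : eqType) (r : seq I) (F G : I -> R) :
  (forall i, i \in r -> F i <= G i) ->
  \big[Rplus/0]_(i <- r) F i <= \big[Rplus/0]_(i <- r) G i.
Proof.
elim: r => [|a r IH] H; first by rewrite !big_nil; lra.
rewrite !big_cons; have := H a (mem_head _ _).
have : \big[Rplus/0]_(i <- r) F i <= \big[Rplus/0]_(i <- r) G i.
  by apply: IH => i Hi; apply: H; rewrite in_cons Hi orbT.
lra.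
Qed.

Lemma bigR_const (I : Type) (r : seq I) (a : R) :
  \big[Rplus/0]_(i <- r) a = INR (size r) * a.
Proof.
elim: r => [|x r IH]; first by rewrite big_nil /=; lra.
rewrite big_cons IH; change (size (x :: r)) with (Datatypes.S (size r)); rewrite S_INR; lra.
Qed.

Lemma sub_sum (I : eqType) (L L' : seq I) (F : I -> R) :
  uniq L -> uniq L' -> {subset L <= L'} -> (forall i, 0 <= F i) ->
  \big[Rplus/0]_(i <- L) F i <= \big[Rplus/0]_(i <- L') F i.
Proof.
move=> uL uL' sub F0.
rewrite [X in _ <= X](bigID (fun i => i \in L)) /=.
have -> : \big[Rplus/0]_(i <- L' | i \in L) F i = \big[Rplus/0]_(i <- L) F i.
  rewrite -big_filter; apply: perm_big; apply: uniq_perm.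
  - exact: filter_uniq.
  - exact: uL.
  move=> i; rewrite mem_filter; case iL: (i \in L) => //=; exact: sub.
have := @bigR_ge0 _ L' (fun i => i \notin L) F (fun i _ => F0 i); lra.
Qed.

Lemma sub_sumS (L L' : seq S) (F : S -> R) :
  uniq L -> uniq L' -> {subset L <= L'} -> (forall i, 0 <= F i) ->
  \big[Rplus/0]_(i <- L) F i <= \big[Rplus/0]_(i <- L') F i.
Proof. exact: sub_sum. Qed.

Lemma sums_ge0 f s : sums f s -> forall x, 0 <= f x.
Proof. by case. Qed.

Lemma sums_ub f s L : sums f s -> uniq L -> \big[Rplus/0]_(x <- L) f x <= s.
Proof. by case=> _ [ub _] uL; apply: ub; exists L. Qed.

Lemma sums_s_ge0 f s : sums f s -> 0 <= s.
Proof. move=> H; have := @sums_ub f s [::] H; rewrite big_nil; apply=> //. Qed.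

Lemma sums_approx f s : sums f s -> forall eps, 0 < eps ->
  exists L, uniq L /\ s - eps < \big[Rplus/0]_(x <- L) f x.
Proof.
case=> _ [ub lub] eps He; apply: NNPP => Hn.
have : s <= s - eps; last lra.
apply: lub => r [L [uL ->]].
apply: Rnot_lt_le => Hlt; apply: Hn; by exists L.
Qed.

Lemma sums_intro f s : (forall x, 0 <= f x) ->
  (forall L, uniq L -> \big[Rplus/0]_(x <- L) f x <= s) ->
  (forall eps, 0 < eps -> exists L, uniq L /\ s - eps < \big[Rplus/0]_(x <- L) f x) ->
  sums f s.
Proof.
move=> f0 ub ap; split=> //; split.
  by move=> r [L [uL ->]]; apply: ub.
move=> M HM; apply: Rnot_lt_le => Hlt.
have [L [uL HL]] := ap (s - M) ltac:(lra).
have : \big[Rplus/0]_(x <- L) f x <= M by apply: HM; exists L.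
lra.
Qed.

Lemma sums_unique f s1 s2 : sums f s1 -> sums f s2 -> s1 = s2.
Proof.
move=> [_ H1] [_ H2]; apply: Rle_antisym.
  by apply: (proj2 H1); apply: (proj1 H2).
by apply: (proj2 H2); apply: (proj1 H1).
Qed.

Lemma sums_ext f g s : (forall x, f x = g x) -> sums f s -> sums g s.
Proof.
move=> E H; apply: sums_intro.
- by move=> x; rewrite -E; apply: sums_ge0 H x.
- by move=> L uL; under eq_bigr do rewrite -E; apply: sums_ub.
- move=> eps He; have [L [uL HL]] := sums_approx H He; exists L; split=> //.
  by under eq_bigr do rewrite -E.
Qed.

Lemma sums0 : sums (fun _ : S => 0) 0.
Proof.
apply: sums_intro => [x|L _|eps He]; first lra.
  by rewrite big1 //; lra.
exists [::]; rewrite big_nil; split => //; lra.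
Qed.

Lemma undup_cat_sub1 L1 L2 : {subset L1 <= undup (L1 ++ L2)}.
Proof. by move=> x; rewrite mem_undup mem_cat => ->. Qed.
Lemma undup_cat_sub2 L1 L2 : {subset L2 <= undup (L1 ++ L2)}.
Proof. by move=> x; rewrite mem_undup mem_cat => ->; rewrite orbT. Qed.

Lemma sumsD f g a b : sums f a -> sums g b -> sums (fun x => f x + g x) (a + b).
Proof.
move=> Hf Hg; apply: sums_intro.
- move=> x; have := sums_ge0 Hf x; have := sums_ge0 Hg x; lra.
- move=> L uL; rewrite big_split /=.
  have := sums_ub Hf uL; have := sums_ub Hg uL; lra.
- move=> eps He.
  have [L1 [u1 H1]] := sums_approx Hf (eps := eps/2) ltac:(lra).
  have [L2 [u2 H2]] := sums_approx Hg (eps := eps/2) ltac:(lra).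
  exists (undup (L1 ++ L2)); split; first exact: undup_uniq.
  rewrite big_split /=.
  have := sub_sumS u1 (undup_uniq (L1 ++ L2)) (@undup_cat_sub1 L1 L2) (sums_ge0 Hf).
  have := sub_sumS u2 (undup_uniq (L1 ++ L2)) (@undup_cat_sub2 L1 L2) (sums_ge0 Hg).
  lra.
Qed.

Lemma sumsZ c f a : 0 <= c -> sums f a -> sums (fun x => c * f x) (c * a).
Proof.
move=> c0 Hf; case: (Req_dec c 0) => [->|cn0].
  apply: (sums_ext (f := fun _ => 0)) => [x|]; first lra.
  rewrite Rmult_0_l; exact: sums0.
apply: sums_intro.
- move=> x; have := sums_ge0 Hf x; nra.
- move=> L uL; rewrite -big_distrr /=; have := sums_ub Hf uL.
  move=> H; apply: Rmult_le_compat_l => //.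
- move=> eps He.
  have [L [uL HL]] := sums_approx Hf (eps := eps / c)
     ltac:(apply: Rdiv_lt_0_compat; lra).
  exists L; split => //; rewrite -big_distrr /=.
  have : c * (a - eps / c) < c * \big[Rplus/0]_(x <- L) f x.
    apply: Rmult_lt_compat_l; lra.
  have -> : c * (a - eps / c) = c * a - eps by field.
  done.
Qed.

Lemma sums_big (I : Type) (r : seq I) (F : I -> S -> R) (a : I -> R) :
  (forall i, sums (F i) (a i)) ->
  sums (fun x => \big[Rplus/0]_(i <- r) F i x) (\big[Rplus/0]_(i <- r) a i).
Proof.
move=> H; elim: r => [|i r IH].
  rewrite big_nil; apply: (sums_ext (f := fun _ => 0)) => [x|]; rewrite ?big_nil //; exact: sums0.
rewrite big_cons; apply: (sums_ext (f := fun x => F i x + \big[Rplus/0]_(j <- r) F j x)).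
  by move=> x; rewrite big_cons.
exact: sumsD.
Qed.


Lemma eps_le a b k : 0 <= k -> (forall eps, 0 < eps -> a <= b + k * eps) -> a <= b.
Proof.
move=> k0 H; apply: Rnot_lt_le => Hlt.
have := H ((a - b) / (2 * (k + 1))) ltac:(apply: Rdiv_lt_0_compat; lra).
have -> : k * ((a - b) / (2 * (k + 1))) = (a - b) * (k / (2 * (k + 1))) by field; lra.
have : k / (2 * (k + 1)) < 1.
  apply/(Rmult_lt_reg_r (2 * (k + 1))); first lra.
  rewrite /Rdiv Rmult_assoc Rinv_l; lra.
have : 0 <= k / (2 * (k + 1)) by apply: Rmult_le_pos; [lra| apply: Rlt_le; apply: Rinv_0_lt_compat; lra].
nra.
Qed.

Lemma family_approx (G : S -> S -> R) (a : S -> R) :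
  (forall z, sums (G z) (a z)) -> forall eps, 0 < eps -> forall L : seq S,
  exists Y : seq S, uniq Y /\ forall z : S, z \in L -> a z - eps < \big[Rplus/0]_(y <- Y) G z y.
Proof.
move=> H eps He; elim=> [|z L [Y [uY HY]]].
  by exists [::]; split.
have [Y1 [u1 H1]] := sums_approx (H z) He.
exists (undup (Y1 ++ Y)); split; first exact: undup_uniq.
move=> z'; rewrite in_cons => /orP [/eqP ->|zL].
  have := sub_sumS u1 (undup_uniq (Y1 ++ Y)) (@undup_cat_sub1 Y1 Y) (sums_ge0 (H z)) => Hs.
  exact: (Rlt_le_trans _ _ _ H1 Hs).
have := sub_sumS uY (undup_uniq (Y1 ++ Y)) (@undup_cat_sub2 Y1 Y) (sums_ge0 (H z')).
move=> Hs; exact: (Rlt_le_trans _ _ _ (HY z' zL) Hs).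
Qed.

Lemma tonelli (F : S -> S -> R) (r c : S -> R) Sv :
  (forall y, sums (fun x => F x y) (r y)) -> sums r Sv ->
  (forall x, sums (fun y => F x y) (c x)) -> sums c Sv.
Proof.
move=> Hr HS Hc.
have F0 : forall x y, 0 <= F x y by move=> x y; exact: (sums_ge0 (Hr y) x).
apply: sums_intro.
- by move=> x; exact: sums_s_ge0 (Hc x).
- move=> L uL; apply: (@eps_le _ _ (INR (size L))); first exact: pos_INR.
  move=> eps He.
  have [Y [uY HY]] := family_approx Hc He L.
  have H1 : \big[Rplus/0]_(x <- L) c x <=
            \big[Rplus/0]_(x <- L) (\big[Rplus/0]_(y <- Y) F x y + eps).
    by apply: bigR_le_in => x xL; have := HY x xL; lra.
  rewrite big_split /= bigR_const in H1.
  rewrite exchange_big /= in H1.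
  have H2 : \big[Rplus/0]_(y <- Y) \big[Rplus/0]_(x <- L) F x y <=
            \big[Rplus/0]_(y <- Y) r y.
    by apply: bigR_le => y _; exact: sums_ub (Hr y) uL.
  have := sums_ub HS uY; lra.
- move=> eps He.
  have [Y [uY HY]] := sums_approx HS (eps := eps/2) ltac:(lra).
  set e2 := eps / 2 / (INR (size Y) + 1).
  have Hs0 := pos_INR (size Y).
  have e2p : 0 < e2 by apply: Rdiv_lt_0_compat; lra.
  have [X [uX HX]] := family_approx Hr e2p Y.
  exists X; split => //.
  have H1 : \big[Rplus/0]_(x <- X) \big[Rplus/0]_(y <- Y) F x y <=
            \big[Rplus/0]_(x <- X) c x.
    by apply: bigR_le => x _; exact: sums_ub (Hc x) uY.
  rewrite exchange_big /= in H1.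
  have H2 : \big[Rplus/0]_(y <- Y) (r y - e2) <=
            \big[Rplus/0]_(y <- Y) \big[Rplus/0]_(x <- X) F x y.
    by apply: bigR_le_in => y yY; have := HX y yY; lra.
  have E : \big[Rplus/0]_(y <- Y) (r y - e2) =
           \big[Rplus/0]_(y <- Y) r y + INR (size Y) * (- e2).
    by rewrite -bigR_const -big_split /=; apply: eq_bigr => y _; lra.
  have E2 : INR (size Y) * e2 <= eps / 2.
    rewrite /e2 /Rdiv.
    have -> : INR (size Y) * (eps * / 2 * / (INR (size Y) + 1)) =
              eps / 2 * (INR (size Y) / (INR (size Y) + 1)) by field; lra.
    have : INR (size Y) / (INR (size Y) + 1) <= 1.
      apply/(Rmult_le_reg_r (INR (size Y) + 1)); first lra.
      rewrite /Rdiv Rmult_assoc Rinv_l; lra.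
    have : 0 <= INR (size Y) / (INR (size Y) + 1) by apply: Rmult_le_pos; [lra| apply: Rlt_le; apply: Rinv_0_lt_compat; lra].
    nra.
  lra.
Qed.


Lemma sum_pick (I : eqType) (L : seq I) (a : I) (g : R) :
  uniq L -> \big[Rplus/0]_(y <- L) (if a == y then g else 0) = if a \in L then g else 0.
Proof.
elim: L => [|y L IH] /=; first by rewrite big_nil.
move=> /andP [yL uL]; rewrite big_cons IH // in_cons.
case: (eqVneq a y) => [->|_] /=; [rewrite (negPf yL); lra | case: (a \in L); lra].
Qed.

Lemma fin_support (I : finType) (c : I -> R) (yv : I -> S) (phi : S -> R) :
  (forall i, 0 <= c i) -> (forall y, 0 <= phi y) ->
  sums (fun y => \big[Rplus/0]_(i : I) (c i * (if yv i == y then 1 else 0)) * phi y)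
       (\big[Rplus/0]_(i : I) (c i * phi (yv i))).
Proof.
move=> c0 p0.
have key : forall L : seq S, uniq L ->
  \big[Rplus/0]_(y <- L) (\big[Rplus/0]_(i : I) (c i * (if yv i == y then 1 else 0)) * phi y)
  = \big[Rplus/0]_(i : I) (if yv i \in L then c i * phi (yv i) else 0).
  move=> L uL.
  under eq_bigr do rewrite big_distrl /=.
  rewrite exchange_big /=; apply: eq_bigr => i _.
  rewrite -(sum_pick (yv i) (c i * phi (yv i)) uL).
  by apply: eq_bigr => y _; case: (eqVneq (yv i) y) => [->|_]; lra.
apply: sums_intro.
- move=> y; apply: Rmult_le_pos => //; apply: bigR_ge0 => i _.
  by case: eqP => _; have := c0 i; lra.
- move=> L uL; rewrite key //; apply: bigR_le => i _.
  by case: (yv i \in L) => //; have := c0 i; have := p0 (yv i); nra.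
- move=> eps He; exists (undup [seq yv i | i <- enum I]); split; first exact: undup_uniq.
  rewrite key ?undup_uniq //.
  have -> : \big[Rplus/0]_(i : I) (if yv i \in undup [seq yv i | i <- enum I]
               then c i * phi (yv i) else 0) = \big[Rplus/0]_(i : I) (c i * phi (yv i)).
    apply: eq_bigr => i _; rewrite mem_undup.
    by rewrite (map_f yv (mem_enum I i)).
  lra.
Qed.

End Sums.

Lemma marg (I J : finType) (f : I -> J -> R) (i0 : I) (phi : J -> R) :
  (forall i, i != i0 -> \big[Rplus/0]_(j : J) f i j = 1) ->
  \big[Rplus/0]_(t : {ffun I -> J}) ((\big[Rmult/1]_(i : I) f i (t i)) * phi (t i0))
  = \big[Rplus/0]_(j : J) (f i0 j * phi j).
Proof.
move=> H.
pose F' i j := if i == i0 then f i j * phi j else f i j.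
have E1 : forall t : {ffun I -> J},
   (\big[Rmult/1]_(i : I) f i (t i)) * phi (t i0) = \big[Rmult/1]_(i : I) F' i (t i).
  move=> t; rewrite (bigD1 i0) // [in RHS](bigD1 i0) //= /F' eqxx.
  rewrite [X in _ = _ * X](eq_bigr (fun i => f i (t i))); last by move=> i /negPf ->.
  ring.
rewrite (eq_bigr _ (fun t _ => E1 t)) -(bigA_distr_bigA F') /=.
rewrite (bigD1 i0 (P := predT) (F := fun i => \big[Rplus/0]_(j : J) F' i j)) //=.
rewrite [X in _ * X = _]big1 ?Rmult_1_r.
  by apply: eq_bigr => j _; rewrite /F' eqxx.
move=> i ni; rewrite -(H i ni); apply: eq_bigr => j _; by rewrite /F' (negPf ni).
Qed.

Lemma sum_prod3 (I1 I2 : finType) (a : I1 -> R) (b : I2 -> R) (p : R)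
   (q : I1 -> R) (r : I2 -> R) :
  \big[Rplus/0]_(i : I1) a i = 1 -> \big[Rplus/0]_(j : I2) b j = 1 ->
  \big[Rplus/0]_(i : I1) \big[Rplus/0]_(j : I2) (a i * b j * (p + q i + r j))
  = p + \big[Rplus/0]_(i : I1) (a i * q i) + \big[Rplus/0]_(j : I2) (b j * r j).
Proof.
move=> Ha Hb.
have E : forall i, \big[Rplus/0]_(j : I2) (a i * b j * (p + q i + r j))
   = a i * (p + q i) + a i * \big[Rplus/0]_(j : I2) (b j * r j).
  move=> i.
  have -> : \big[Rplus/0]_(j : I2) (a i * b j * (p + q i + r j)) =
     \big[Rplus/0]_(j : I2) (a i * (p + q i) * b j + a i * (b j * r j)).
    by apply: eq_bigr => j _; ring.
  by rewrite big_split /= -!big_distrr /= Hb; ring.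
rewrite (eq_bigr _ (fun i _ => E i)) big_split /= -big_distrl /= Ha.
have -> : \big[Rplus/0]_(i : I1) (a i * (p + q i)) =
   \big[Rplus/0]_(i : I1) (p * a i + a i * q i) by apply: eq_bigr => i _; ring.
rewrite big_split /= -big_distrr /= Ha; ring.
Qed.

Section Model.
Variable V : finType.
Implicit Types (w : V -> V -> R) (x : state V).

Lemma deg_pos w u u' : weighted_graph w -> connected_graph w -> u != u' -> 0 < deg w u.
Proof.
move=> [w0 _] conn nu.
have H := clos_rt_rt1n _ _ _ _ (conn u u').
inversion H as [E|y z Hy _ E]; first by subst; rewrite eqxx in nu.
rewrite /deg (bigD1 y) //=.
have := @bigR_ge0 _ (index_enum V) (fun i => i != y) (w u) (fun i _ => w0 u i).
rewrite /edge in Hy; lra.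
Qed.

Lemma Ptrans_sum w u : 0 < deg w u -> \big[Rplus/0]_(j : V) Ptrans w u j = 1.
Proof.
move=> d0; rewrite /Ptrans /Rdiv -big_distrl /= -/(deg w u); field; lra.
Qed.

Lemma Ptrans_ge0 w u j : weighted_graph w -> 0 < deg w u -> 0 <= Ptrans w u j.
Proof.
move=> [w0 _] d0; rewrite /Ptrans /Rdiv; apply: Rmult_le_pos => //.
by apply: Rlt_le; apply: Rinv_0_lt_compat.
Qed.

Definition gf (J : V -> R) beta us (v : V) (bo : bool) : R :=
  if v == us then (if bo then 0 else 1)
  else if bo then (beta * J v) else (1 - beta * J v).

Definition tf w us x (u j : V) : R :=
  if (u != us) && (0 < x u)%N then Ptrans w u j else if j == u then 1 else 0.

Lemma gf_sum J beta us v : \big[Rplus/0]_(bo : bool) gf J beta us v bo = 1.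
Proof. rewrite big_bool /gf /=; case: (v == us); lra. Qed.

Lemma tf_sum w us x u : (u != us -> 0 < deg w u) ->
  \big[Rplus/0]_(j : V) tf w us x u j = 1.
Proof.
move=> Hd; rewrite /tf; case: (boolP ((u != us) && (0 < x u)%N)) => [/andP [nu _]|_].
  exact: Ptrans_sum (Hd nu).
rewrite (bigD1 u) //= eqxx big1; first lra.
by move=> j /negPf ->.
Qed.

Lemma card_INR (T : finType) (P : pred T) :
  INR #|[set u | P u]| = \big[Rplus/0]_(u : T) (if P u then 1 else 0).
Proof.
rewrite -sum1_card (big_morph INR plus_INR (erefl (INR 0))) big_mkcond.
by apply: eq_bigr => u _; rewrite inE; case: (P u).
Qed.

Lemma G_formula w (J : V -> R) beta us x v :
  v != us -> (forall u, u != us -> 0 < deg w u) ->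
  \big[Rplus/0]_(b : {ffun V -> bool}) \big[Rplus/0]_(t : {ffun V -> V})
     (gen_prob J beta us b * tgt_prob w us x t * INR (dc_next us x b t v))
  = INR (x v) - (if (0 < x v)%N then 1 else 0) + beta * J v +
    \big[Rplus/0]_(u : V) (if (u != us) && (0 < x u)%N then Ptrans w u v else 0).
Proof.
move=> vus Hd.
set Bx := (if (0 < x v)%N then 1 else 0).
set C := fun t : {ffun V -> V} => \big[Rplus/0]_(u : V)
   (if (u != us) && (0 < x u)%N then (if t u == v then 1 else 0) else 0).
have Hn : forall b t, INR (dc_next us x b t v) = (INR (x v) - Bx) + INR (b v) + C t.
  move=> b t; rewrite /dc_next ffunE (negPf vus) plus_INR minus_INR; last first.
    by apply/leP; case: (x v) => // n; rewrite addSn.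
  rewrite plus_INR card_INR /C /Bx.
  have -> : INR (0 < x v)%N = (if (0 < x v)%N then 1 else 0) by case: (0 < x v)%N.
  have -> : \big[Rplus/0]_(u : V) (if (u != us) && (0 < x u)%N && (t u == v) then 1 else 0)
     = \big[Rplus/0]_(u : V) (if (u != us) && (0 < x u)%N then (if t u == v then 1 else 0) else 0).
    by apply: eq_bigr => u _; case: ((u != us) && (0 < x u)%N).
  lra.
rewrite (eq_bigr (fun b => \big[Rplus/0]_(t : {ffun V -> V})
   (gen_prob J beta us b * tgt_prob w us x t * ((INR (x v) - Bx) + INR (b v) + C t))));
  last by move=> b _; apply: eq_bigr => t _; rewrite Hn.
rewrite (@sum_prod3 _ _ (gen_prob J beta us) (tgt_prob w us x) (INR (x v) - Bx) (fun b : {ffun V -> bool} => INR (b v)) C).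
- have Hq : \big[Rplus/0]_(b : {ffun V -> bool}) (gen_prob J beta us b * INR (b v)) = beta * J v.
    rewrite (@marg _ _ (gf J beta us) v (fun bo : bool => INR bo)); last first.
      by move=> i _; apply: gf_sum.
    by rewrite big_bool /gf /= (negPf vus) /=; lra.
  have Hr : \big[Rplus/0]_(t : {ffun V -> V}) (tgt_prob w us x t * C t) =
      \big[Rplus/0]_(u : V) (if (u != us) && (0 < x u)%N then Ptrans w u v else 0).
    rewrite /C /=; under eq_bigr do rewrite big_distrr /=.
    rewrite exchange_big /=; apply: eq_bigr => u _.
    rewrite (@marg _ _ (tf w us x) u
       (fun j => if (u != us) && (0 < x u)%N then (if j == v then 1 else 0) else 0)); last first.
      by move=> i _; apply: tf_sum => /Hd.
    rewrite /tf; case: ((u != us) && (0 < x u)%N); last by rewrite big1 // => j _; lra.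
    rewrite (bigD1 v) //= eqxx big1; first lra.
    by move=> j /negPf ->; lra.
  by rewrite Hq Hr.
- have E := @marg _ _ (gf J beta us) us (fun _ => 1) (fun i _ => gf_sum J beta us i).
  transitivity (\big[Rplus/0]_(t : {ffun V -> bool}) ((\big[Rmult/1]_(i : V) gf J beta us i (t i)) * 1)).
    by apply: eq_bigr => b _; rewrite Rmult_1_r.
  by rewrite E; under eq_bigr do rewrite Rmult_1_r; apply: gf_sum.
- have E := @marg _ _ (tf w us x) us (fun _ => 1) (fun i _ => tf_sum x (Hd i)).
  transitivity (\big[Rplus/0]_(t : {ffun V -> V}) ((\big[Rmult/1]_(i : V) tf w us x i (t i)) * 1)).
    by apply: eq_bigr => b _; rewrite Rmult_1_r.
  by rewrite E; under eq_bigr do rewrite Rmult_1_r; apply: tf_sum => /Hd.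
Qed.

End Model.

Lemma bigR_sub (I : Type) (r : seq I) (F G : I -> R) :
  \big[Rplus/0]_(i <- r) (F i - G i) =
  \big[Rplus/0]_(i <- r) F i - \big[Rplus/0]_(i <- r) G i.
Proof.
elim: r => [|a r IH]; first by rewrite !big_nil; lra.
by rewrite !big_cons IH; lra.
Qed.

Lemma prod_ge0 (I : Type) (r : seq I) (F : I -> R) :
  (forall i, 0 <= F i) -> 0 <= \big[Rmult/1]_(i <- r) F i.
Proof.
move=> H; apply: (big_ind (fun x => 0 <= x)) => //; first lra.
by move=> a b Ha Hb; apply: Rmult_le_pos.
Qed.

Theorem mainTheorem2 (V : finType) (w : V -> V -> R) (us : V) (Vs : {set V})
    (J : V -> R) (beta : R) (pi : state V -> R) (eta : V -> R) :
  weighted_graph w ->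
  connected_graph w ->
  us \notin Vs ->
  (forall v, v \in Vs -> (0 < J v)) ->
  (forall v, v \notin Vs -> v != us -> J v = 0) ->
  J us = (- \big[Rplus/0]_(v | v != us) J v) ->
  (0 < beta) ->
  (forall v, v \in Vs -> (beta * J v <= 1)) ->
  (* ergodicity of Q^beta with stationary distribution pi *)
  irreducible (dc_P w J beta us) us ->
  aperiodic (dc_P w J beta us) us ->
  stationary (dc_P w J beta us) pi ->
  (* finite expected queue lengths *)
  (forall u, u != us -> exists s, sums (fun x : state V => (pi x * INR (x u))) s) ->
  (* eta_u = pi(Q(u) > 0) for u <> us, eta_us = 0 *)
  (forall u, u != us ->
     sums (fun x : state V => if (0 < x u)%N then pi x else 0) (eta u)) ->
  eta us = 0 ->
  (forall v, (eta v - (\big[Rplus/0]_(u : V) (eta u * Ptrans w u v))) = (beta * J v)) /\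
  (forall v, \big[Rplus/0]_(u : V) (eta u / deg w u * lap w u v) = (beta * J v)).
Proof.
move=> wg conn usVs Jpos J0 Jus bpos bJ1 _ _ [pi1 stat] finE etaH eta_us.
have degP : forall u, u != us -> 0 < deg w u := fun u H => deg_pos wg conn H.
have pi0 : forall x, 0 <= pi x := sums_ge0 pi1.
have pJ : forall v, v != us -> 0 <= beta * J v <= 1.
  move=> v vus; case: (boolP (v \in Vs)) => vVs.
    by have := Jpos v vVs; have := bJ1 v vVs; nra.
  by rewrite (J0 v vVs vus); lra.
have gen0 : forall b, 0 <= gen_prob J beta us b.
  move=> b; apply: prod_ge0 => v; case: (boolP (v == us)) => [_|vus].
    by case: (b v); lra.
  by have := pJ v vus; case: (b v); lra.
have tgt0 : forall x t, 0 <= tgt_prob w us x t.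
  move=> x t; apply: prod_ge0 => u; case: (boolP ((u != us) && (0 < x u)%N)).
    by move=> /andP [nu _]; apply: Ptrans_ge0 => //; apply: degP.
  by move=> _; case: (t u == u); lra.
have key : forall v, v != us -> eta v = beta * J v +
    \big[Rplus/0]_(u : V) (if u != us then Ptrans w u v * eta u else 0).
  move=> v vus.
  have [SV HSV] := finE v vus.
  pose G x := \big[Rplus/0]_(b : {ffun V -> bool}) \big[Rplus/0]_(t : {ffun V -> V})
     (gen_prob J beta us b * tgt_prob w us x t * INR (dc_next us x b t v)).
  have Hc : sums (fun x => pi x * G x) SV.
    apply: (@tonelli _ (fun x y => pi x * dc_P w J beta us x y * INR (y v))
                 (fun y => pi y * INR (y v))) => //.
      move=> y; have := sumsZ (pos_INR (y v)) (stat y).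
      rewrite Rmult_comm; apply: sums_ext => x; ring.
    move=> x.
    have := @fin_support V ({ffun V -> bool} * {ffun V -> V})%type
      (fun p => pi x * gen_prob J beta us p.1 * tgt_prob w us x p.2)
      (fun p => dc_next us x p.1 p.2) (fun y => INR (y v)).
    have -> : \big[Rplus/0]_(p : ({ffun V -> bool} * {ffun V -> V})%type)
       (pi x * gen_prob J beta us p.1 * tgt_prob w us x p.2 * INR (dc_next us x p.1 p.2 v))
       = pi x * G x.
      rewrite /G big_distrr /=; under [RHS]eq_bigr do rewrite big_distrr /=.
      by rewrite pair_bigA /=; apply: eq_bigr => p _; ring.
    move=> H; apply: (sums_ext _ (H _ _)).
    - move=> y; rewrite /dc_P pair_bigA /= big_distrr /= !big_distrl /=.
      by apply: eq_bigr => p _; ring.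
    - move=> p; have := pi0 x; have := gen0 p.1; have := tgt0 x p.2.
      move=> *; apply: Rmult_le_pos => //; apply: Rmult_le_pos => //.
    - move=> y; exact: pos_INR.
  have HL := sumsD Hc (etaH v vus).
  have HR : sums (fun x => pi x * INR (x v) + (beta * J v * pi x +
      \big[Rplus/0]_(u : V) (if u != us then
          Ptrans w u v * (if (0 < x u)%N then pi x else 0) else 0)))
      (SV + (beta * J v * 1 +
      \big[Rplus/0]_(u : V) (if u != us then Ptrans w u v * eta u else 0))).
    apply: sumsD => //; apply: sumsD; first by apply: sumsZ => //; have := pJ v vus; lra.
    apply: (@sums_big V V (index_enum V)
       (fun u x => if u != us then Ptrans w u v * (if (0 < x u)%N then pi x else 0) else 0)
       (fun u => if u != us then Ptrans w u v * eta u else 0)).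
    move=> u; case: (boolP (u != us)) => nu.
      by apply: sumsZ; [apply: Ptrans_ge0 => //; apply: degP | apply: etaH].
    exact: sums0.
  have HL' : sums (fun x => pi x * INR (x v) + (beta * J v * pi x +
      \big[Rplus/0]_(u : V) (if u != us then
          Ptrans w u v * (if (0 < x u)%N then pi x else 0) else 0))) (SV + eta v).
    apply: (sums_ext _ HL) => x.
    rewrite /G (@G_formula V w J beta us x v vus degP).
    have -> : \big[Rplus/0]_(u : V) (if u != us then
          Ptrans w u v * (if (0 < x u)%N then pi x else 0) else 0) =
       pi x * \big[Rplus/0]_(u : V) (if (u != us) && (0 < x u)%N then Ptrans w u v else 0).
      rewrite big_distrr /=; apply: eq_bigr => u _.
      by case: (u != us); case: (0 < x u)%N => /=; ring.
    by case: (0 < x v)%N; ring.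
  have := sums_unique HL' HR; lra.
have EP : forall v, \big[Rplus/0]_(u : V) (eta u * Ptrans w u v) =
    \big[Rplus/0]_(u : V) (if u != us then Ptrans w u v * eta u else 0).
  move=> v; apply: eq_bigr => u _; case: (boolP (u != us)) => nu; first ring.
  by move: nu; rewrite negbK => /eqP ->; rewrite eta_us; ring.
have first : forall v, eta v - \big[Rplus/0]_(u : V) (eta u * Ptrans w u v) = beta * J v.
  move=> v; case: (boolP (v != us)) => vus.
    by rewrite EP (key v vus); ring.
  move: vus; rewrite negbK => /eqP ->.
  pose D v := eta v - \big[Rplus/0]_(u : V) (eta u * Ptrans w u v).
  have D0 : \big[Rplus/0]_(v : V) D v = 0.
    rewrite /D bigR_sub exchange_big /=.
    have -> : \big[Rplus/0]_(u : V) \big[Rplus/0]_(v : V) (eta u * Ptrans w u v) =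
              \big[Rplus/0]_(u : V) eta u.
      apply: eq_bigr => u _; rewrite -big_distrr /=.
      case: (boolP (u != us)) => nu; first by rewrite Ptrans_sum ?Rmult_1_r //; apply: degP.
      by move: nu; rewrite negbK => /eqP ->; rewrite eta_us; ring.
    ring.
  rewrite (bigD1 us) //= in D0.
  have E : \big[Rplus/0]_(v | v != us) D v = \big[Rplus/0]_(v | v != us) (beta * J v).
    apply: eq_bigr => z zus; rewrite /D EP (key z zus); ring.
  rewrite E -big_distrr /= in D0.
  rewrite Jus; rewrite /D in D0; lra.
split => // v.
rewrite -first /lap /degD /adjA.
have -> : \big[Rplus/0]_(u : V) (eta u / deg w u * ((if u == v then deg w u else 0) - w u v))
  = \big[Rplus/0]_(u : V) (eta u / deg w u * (if u == v then deg w u else 0) - eta u * Ptrans w u v).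
  by apply: eq_bigr => u _; rewrite /Ptrans /Rdiv; ring.
rewrite bigR_sub (bigD1 v) //= eqxx big1 => [|u /negPf ->]; last ring.
case: (boolP (v != us)) => vus.
  have := degP v vus => dp; field; lra.
by move: vus; rewrite negbK => /eqP ->; rewrite eta_us /Rdiv; ring.
Qed.
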